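(* Let $M$ be a reduced irreducible affine scheme of finite type over $\mathbb C$ and let $\Gamma$ be a finitely presented group acting on $M$ by algebraic automorphisms. If there is one point of $M$ whose $\Gamma$-orbit is Zariski dense in $M$, then there is a countable union of proper closed subvarieties of $M$ such that every point $x\in M$ not lying in this countable union has Zariski dense $\Gamma$-orbit. *)

(* Defs.v *)
(* Complex numbers are modelled as C := R[i] = complex R for
   R : realType (MathComp-Analysis' complete archimedean real-closed field,
   i.e. the reals); affine varieties are given by polynomial equations in
   {mpoly C[n]} (multinomials). *)
From HB Require Import structures.
From mathcomp Require Import all_boot all_algebra.
From mathcomp Require Import reals.
From mathcomp Require Import complex.
From mathcomp Require Import mpoly.

Set Implicit Arguments.
Unset Strict Implicit.
Unset Printing Implicit Defensive.

Import GRing.Theory.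
Local Open Scope ring_scope.

Section AffineGeometry.
Variables (R : realType) (n : nat).
Local Notation C := (R[i]).
Local Notation pt := ('I_n -> C).
Local Notation cpoly := {mpoly C[n]}.

Definition zero_locus (S : cpoly -> Prop) : pt -> Prop :=
  fun x => forall p, S p -> p.@[x] = 0.

(* Complex points of the affine scheme Spec (C[x_1..x_n] / <I>). *)
Definition variety (I : seq cpoly) : pt -> Prop :=
  zero_locus (fun p => p \in I).

Definition in_ideal (I : seq cpoly) (p : cpoly) : Prop :=
  exists cs : seq cpoly, size cs = size I /\
    p = \sum_(j < size I) cs`_j * I`_j.

(* The ideal <I> is radical, i.e. C[x]/<I> is reduced. *)
Definition radical_ideal (I : seq cpoly) : Prop :=
  forall (p : cpoly) (k : nat), in_ideal I (p ^+ k) -> in_ideal I p.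

Definition zariski_irreducible (M : pt -> Prop) : Prop :=
  (exists x, M x) /\
  forall S1 S2 : cpoly -> Prop,
    (forall x, M x -> zero_locus S1 x \/ zero_locus S2 x) ->
    (forall x, M x -> zero_locus S1 x) \/ (forall x, M x -> zero_locus S2 x).

Definition regular_on (M : pt -> Prop) (f : pt -> pt) : Prop :=
  exists F : 'I_n -> cpoly, forall x, M x -> forall j, f x j = (F j).@[x].

Definition zariski_dense_in (M A : pt -> Prop) : Prop :=
  forall p : cpoly, (forall y, A y -> p.@[y] = 0) ->
                    (forall y, M y -> p.@[y] = 0).

End AffineGeometry.

Section Groups.
Local Open Scope group_scope.
Variable G : groupType.

(* Words in k generators and their inverses: (i, false) = g_i, (i, true) = g_i^-1. *)
Definition word (k : nat) := seq ('I_k * bool).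

Definition eval_word (k : nat) (gens : 'I_k -> G) (w : word k) : G :=
  foldr (fun a acc => (if a.2 then (gens a.1)^-1 else gens a.1) * acc) 1 w.

(* Congruence on words generated by free cancellation and the relators;
   w ~ [::] iff w lies in the normal closure of the relators in the free group. *)
Inductive rel_equiv (k : nat) (rels : seq (word k)) : word k -> word k -> Prop :=
| re_refl w : rel_equiv rels w w
| re_sym u v : rel_equiv rels u v -> rel_equiv rels v u
| re_trans u v w : rel_equiv rels u v -> rel_equiv rels v w -> rel_equiv rels u w
| re_cancel u v (i : 'I_k) (b : bool) :
    rel_equiv rels (u ++ (i, b) :: (i, ~~ b) :: v) (u ++ v)
| re_relator u v r : r \in rels -> rel_equiv rels (u ++ r ++ v) (u ++ v).

Definition finitely_presented : Prop :=
  exists (k : nat) (gens : 'I_k -> G) (rels : seq (word k)),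
    (forall g : G, exists w : word k, eval_word gens w = g) /\
    (forall r, r \in rels -> eval_word gens r = 1) /\
    (forall w : word k, eval_word gens w = 1 -> rel_equiv rels w [::]).

End Groups.

Section Action.
Local Open Scope group_scope.
Variables (R : realType) (n : nat) (G : groupType).
Local Notation pt := ('I_n -> R[i]).

Definition algebraic_action (M : pt -> Prop) (act : G -> pt -> pt) : Prop :=
  [/\ forall g x, M x -> M (act g x),
      forall x, M x -> act 1 x = x,
      forall g h x, M x -> act (g * h) x = act g (act h x)
    & forall g, regular_on M (act g)].

Definition act_orbit (act : G -> pt -> pt) (x : pt) : pt -> Prop :=
  fun y => exists g, y = act g x.

End Action.

(* Main.v *)
Require Import Defs.
From HB Require Import structures.
From mathcomp Require Import all_boot all_algebra.
From mathcomp Require Import reals.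
From mathcomp Require Import complex.
From mathcomp Require Import mpoly.
From Stdlib Require Import ClassicalEpsilon Classical.

Set Implicit Arguments.
Unset Strict Implicit.
Unset Printing Implicit Defensive.
Import GRing.Theory.
Local Open Scope ring_scope.
Section Help.
Variables (R : realType) (n : nat).
Local Notation C := (R[i]).
Local Notation pt := ('I_n -> C).
Local Notation cpoly := {mpoly C[n]}.

Definition NN (d : nat) := #|{: 'X_{1..n < d}}|.
Definition mon d (j : 'I_(NN d)) : 'X_{1..n} := bmnm (enum_val j).
Definition vrow d (y : pt) : 'rV[C]_(NN d) :=
  \row_j \prod_(l < n) y l ^+ mon j l.
Definition Bmx d k (ys : 'I_k -> pt) : 'M[C]_(k, NN d) :=
  \matrix_(i, j) \prod_(l < n) ys i l ^+ mon j l.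
Definition coefcol d (q : cpoly) : 'cV[C]_(NN d) := \col_j q@_(mon j).

Lemma row_Bmx d k (ys : 'I_k -> pt) i : row i (Bmx d ys) = vrow d (ys i).
Proof. by apply/matrixP => a b; rewrite !mxE. Qed.

Lemma eval_rep d (q : cpoly) (z : pt) : (msize q <= d)%N ->
  q.@[z] = (vrow d z *m coefcol d q) 0 0.
Proof.
move=> hq; rewrite {1}(mpolywE hq) raddf_sum /= mxE.
rewrite (big_enum_val (fun m : 'X_{1..n < d} => _)) /=.
apply: eq_bigr => j _; rewrite mevalZ mevalX !mxE mulrC.
by [].
Qed.

Lemma col_poly d (Cm : 'M[C]_(NN d, NN d)) c (z : pt) :
  (\sum_(j < NN d) Cm j c *: 'X_[mon j] : cpoly).@[z] = (vrow d z *m Cm) 0 c.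
Proof.
rewrite raddf_sum /= mxE; apply: eq_bigr => j _.
by rewrite mevalZ mevalX !mxE mulrC.
Qed.

End Help.
Section Help2.
Variables (R : realType) (n : nat).
Local Notation C := (R[i]).
Local Notation pt := ('I_n -> C).
Local Notation cpoly := {mpoly C[n]}.

Lemma dense_sub (M A : pt -> Prop) d m (B : 'M[C]_(m, NN n d)) :
  zariski_dense_in M A ->
  (forall z, A z -> (vrow d z <= B)%MS) ->
  forall y, M y -> (vrow d y <= B)%MS.
Proof.
move=> hd hA y My; rewrite submxE; apply/eqP/matrixP => a c.
rewrite ord1 [X in _ = X]mxE -(col_poly (cokermx B) c y); apply: hd My => z Az.
rewrite col_poly; move: (hA z Az); rewrite submxE => /eqP ->.
by rewrite mxE.
Qed.

Lemma grow d m (B : 'M[C]_(m, NN n d)) (w : 'rV[C]_(NN n d)) :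
  ~~ (w <= B)%MS -> (\rank B < \rank (col_mx B w))%N.
Proof.
move=> hw.
have sB : (B <= col_mx B w)%MS.
  apply/row_subP => i; rewrite -(rowKu i B w); exact (row_sub (lshift 1 i) (col_mx B w)).
have sw : (w <= col_mx B w)%MS.
  have e : row (rshift m (0 : 'I_1)) (col_mx B w) = w.
    by rewrite rowKd; apply/matrixP => a b; rewrite !mxE ord1.
  rewrite -{1}e; exact: row_sub.
have : (B < col_mx B w)%MS.
  rewrite ltmxE sB /=; apply/negP => h; move/negP: hw; apply.
  exact: submx_trans sw h.
by rewrite ltmxErank => /andP[].
Qed.

End Help2.
Section Help3.
Variables (R : realType) (n : nat).
Local Notation C := (R[i]).
Local Notation pt := ('I_n -> C).
Local Notation cpoly := {mpoly C[n]}.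

Definition PM d k (Fs : 'I_k -> 'I_n -> cpoly) : 'M[cpoly]_(k, NN n d) :=
  \matrix_(i, j) \prod_(l < n) Fs i l ^+ mon j l.

Definition Pol d k r (Fs : 'I_k -> 'I_n -> cpoly) (K1 : 'M[C]_(r, k))
  (K2 : 'M[C]_(NN n d, r)) : cpoly :=
  \det (map_mx (fun c => c%:MP) K1 *m PM d Fs *m map_mx (fun c => c%:MP) K2).

Arguments PM d {k}.
Arguments Pol d {k r}.

Lemma evalPol d k r (Fs : 'I_k -> 'I_n -> cpoly) K1 K2 (ys : 'I_k -> pt) x :
  (forall i l, ys i l = (Fs i l).@[x]) ->
  (Pol d Fs K1 K2 : cpoly).@[x] = \det (K1 *m Bmx d ys *m K2 : 'M_r).
Proof.
move=> hy; rewrite /Pol -det_map_mx !map_mxM; congr (\det (_ *m _ *m _)).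
- apply/matrixP => i j; rewrite !mxE; exact: mevalC.
- apply/matrixP => i j; rewrite !mxE rmorph_prod; apply: eq_bigr => l _.
  by rewrite rmorphXn /= hy.
- by apply/matrixP => i j; rewrite !mxE; exact: mevalC.
Qed.

End Help3.
Arguments PM {R n} d {k}.
Arguments Pol {R n} d {k r}.
Theorem lemma2p1 (R : realType) (n : nat) (I : seq {mpoly R[i][n]})
    (G : groupType) (act : G -> ('I_n -> R[i]) -> ('I_n -> R[i])) :
  radical_ideal I ->
  zariski_irreducible (variety I) ->
  finitely_presented G ->
  algebraic_action (variety I) act ->
  (exists x0, variety I x0 /\ zariski_dense_in (variety I) (act_orbit act x0)) ->
  exists Z : nat -> ({mpoly R[i][n]} -> Prop),
    (forall m, exists y, variety I y /\ ~ zero_locus (Z m) y) /\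
    (forall x, variety I x -> (forall m, ~ zero_locus (Z m) x) ->
       zariski_dense_in (variety I) (act_orbit act x)).
Proof.
move=> _ _ _ [hM h1 hmul hreg] [x0 [Mx0 hd]].
set M := variety I in hM hmul hreg Mx0 hd *.
have HF : forall g, {F : 'I_n -> {mpoly R[i][n]} |
    forall x, M x -> forall j, act g x j = (F j).@[x]}.
  by move=> g; apply: constructive_indefinite_description; exact: hreg.
pose F g := sval (HF g).
have hF : forall g x, M x -> forall j, act g x j = (F g j).@[x].
  by move=> g; exact: (svalP (HF g)).
pose Bo d k (g0 : 'I_k -> G) := Bmx d (fun i => act (g0 i) x0).
have stepA : forall d, exists k (g0 : 'I_k -> G),
    forall y, M y -> (vrow d y <= Bo d k g0)%MS.
  move=> d; apply: NNPP => Hn.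
  have Hstep : forall t, exists k (g0 : 'I_k -> G), (t <= \rank (Bo d k g0))%N.
    elim => [|t [k [g0 ht]]]; first by exists 0%N, (fun _ => 1%g).
    have [g hg] : exists g, ~~ (vrow d (act g x0) <= Bo d k g0)%MS.
      apply: NNPP => hn; apply: Hn; exists k, g0.
      apply: dense_sub hd _ => z [g ->].
      case: (boolP (vrow d (act g x0) <= Bo d k g0)%MS) => // h.
      by case: hn; exists g.
    pose g0' (i : 'I_(k + 1)) := match split i with inl a => g0 a | inr _ => g end.
    have e : Bo d _ g0' = col_mx (Bo d k g0) (vrow d (act g x0)).
      apply/matrixP => i j; rewrite !mxE /g0'.
      by case: (split i) => a; rewrite !mxE.
    exists (k + 1)%N, g0'; rewrite e.
    exact: leq_ltn_trans ht (grow hg).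
  have [k [g0 h]] := Hstep (NN n d).+1.
  by move: (leq_trans h (rank_leq_col _)); rewrite ltnn.
pose Z d (p : {mpoly R[i][n]}) := exists k (g0 : 'I_k -> G),
  (forall y, M y -> (vrow d y <= Bo d k g0)%MS) /\
  exists k' (g : 'I_k' -> G) (K1 : 'M[R[i]]_(\rank (Bo d k g0), k'))
    (K2 : 'M[R[i]]_(NN n d, \rank (Bo d k g0))),
    p = Pol d (fun i => F (g i)) K1 K2.
exists Z; split.
  move=> d; exists x0; split => // hz.
  have [k [g0 hg]] := stepA d.
  set B := Bo d k g0.
  pose K1 := (pid_mx (\rank B) : 'M[R[i]]_(\rank B, k)) *m invmx (col_ebase B).
  pose K2 := invmx (row_ebase B) *m (pid_mx (\rank B) : 'M[R[i]]_(NN n d, \rank B)).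
  have hp := hz (Pol d (fun i => F (g0 i)) K1 K2).
  have : Z d (Pol d (fun i => F (g0 i)) K1 K2).
    by exists k, g0; split => //; exists k, g0, K1, K2.
  move/hp; rewrite (@evalPol _ _ _ _ _ _ K1 K2 (fun i => act (g0 i) x0)); last first.
    by move=> i l; apply: hF.
  have -> : K1 *m Bmx d (fun i => act (g0 i) x0) *m K2 = 1%:M.
    rewrite -[Bmx _ _]/B.
    have eB := mulmx_ebase B.
    have uL := col_ebase_unit B; have uU := row_ebase_unit B.
    rewrite /K1 /K2.
    move: eB uL uU; set L := col_ebase B; set U := row_ebase B.
    set r := \rank B => eB uL uU.
    rewrite -[X in _ *m X *m _]eB !mulmxA.
    rewrite (mulmxKV uL) (mulmxK uU).
    rewrite pid_mx_id ?rank_leq_row // pid_mx_id ?rank_leq_col //.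
    exact: pid_mx_1.
  by rewrite det1 => /eqP; rewrite oner_eq0.
move=> x Mx hx q hq y My.
set d := msize q.
have [p [Zp px]] : exists p, Z d p /\ p.@[x] <> 0.
  apply: NNPP => hn; apply: (hx d) => p Zp; apply: NNPP => hp.
  by apply: hn; exists p.
case: Zp => k [g0 [hg [k' [g [K1 [K2 ep]]]]]].
rewrite ep (@evalPol _ _ _ _ _ _ K1 K2 (fun i => act (g i) x)) in px; last first.
  by move=> i l; apply: hF.
set Bx := Bmx d (fun i => act (g i) x) in px.
clear ep p.
set B0 := Bo d k g0 in hg K1 K2 px *.
have rk : (\rank B0 <= \rank Bx)%N.
  have u : K1 *m Bx *m K2 \in unitmx by rewrite unitmxE unitfE; apply/eqP.
  rewrite -{1}(mxrank_unit u).
  exact: leq_trans (mxrankM_maxl _ _) (mxrankM_maxr _ _).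
have sub : (Bx <= B0)%MS.
  apply/row_subP => i; rewrite row_Bmx; apply: hg; exact: hM.
have /andP[_ sub2] : (Bx == B0)%MS.
  by rewrite -(mxrank_leqif_eq sub).2 eqn_leq rk mxrankS.
have [w ew] := submxP (submx_trans (hg y My) sub2).
have hB : Bx *m coefcol d q = 0.
  apply/matrixP => i j; rewrite ord1 [RHS]mxE.
  have e := eval_rep (act (g i) x) (leqnn (msize q)).
  rewrite hq in e; last by exists (g i).
  transitivity ((vrow d (act (g i) x) *m coefcol d q) 0 0); last by rewrite -e.
  by rewrite !mxE; apply: eq_bigr => j' _; rewrite !mxE.
by rewrite (eval_rep y (leqnn (msize q))) ew -mulmxA hB mulmx0 mxE.
Qed.
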